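(* Let $m,n$ be integers, $w_k=(ab^{-1})^m ab(a^{-1}b)^m$ and $r=w_k^n(ab^{-1})^m$ in the free group $F_{a,b}$. For a word $u\in F_{a,b}$ let $P_u\in\mathbb C[x,y,z]$ be the unique polynomial with $\operatorname{tr}\rho(u)=P_u(\operatorname{tr}\rho(a),\operatorname{tr}\rho(b),\operatorname{tr}\rho(ab^{-1}))$ for all $\rho:F_{a,b}\to\mathrm{SL}_2(\mathbb C)$, and let $\varphi=P_{rab}-P_{\overleftarrow{r}ab}$. Then \[\varphi(x,y,z)=\big(xyz+4-x^2-y^2-z^2\big)\big(S_n(t)S_{m-1}(z)-S_{n-1}(t)S_m(z)\big),\] where $t=\left( xS_m(z)-yS_{m-1}(z) \right)\left( yS_m(z)-xS_{m-1}(z) \right)-z\left(S^2_m(z)+S^2_{m-1}(z)\right)+4S_m(z)S_{m-1}(z)$.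
   Context: $\overleftarrow{u}$ denotes the word $u$ with its letters written in reversed order. The Chebyshev polynomials $S_j(\omega)$ are defined for all integers $j$ by $S_0=1$, $S_1=\omega$, $S_{j+1}=\omega S_j-S_{j-1}$. (The polynomial $\varphi$ cuts out the $\mathrm{SL}_2(\mathbb C)$ character variety of the double twist link $J(2m+1,2n+1)$ in $\mathbb C^3(x,y,z)$.) *)

(* Defs.v *)
From HB Require Import structures.
From mathcomp Require Import all_boot all_algebra.
From mathcomp Require Import reals.
From mathcomp.real_closed Require Import complex.
From mathcomp Require Import mpoly.
Set Implicit Arguments. Unset Strict Implicit. Unset Printing Implicit Defensive.
Import GRing.Theory Num.Theory.
Local Open Scope ring_scope.

(* Letters of the free group F_{a,b}: a, a^-1, b, b^-1.  Words are sequences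
   of letters (not necessarily reduced; traces do not depend on reduction). *)
Inductive letter := La | LaI | Lb | LbI.
Definition word := seq letter.

Definition letter_inv (l : letter) : letter :=
  match l with La => LaI | LaI => La | Lb => LbI | LbI => Lb end.

Definition winv (w : word) : word := rev (map letter_inv w).

Definition wpow (w : word) (k : int) : word :=
  match k with
  | Posz n => flatten (nseq n w)
  | Negz n => flatten (nseq n.+1 (winv w))
  end.

Definition wk (m : int) : word :=
  wpow [:: La; LbI] m ++ [:: La; Lb] ++ wpow [:: LaI; Lb] m.

Definition rword (m n : int) : word := wpow (wk m) n ++ wpow [:: La; LbI] m.

Definition wrev (u : word) : word := rev u.

Definition letter_mx (C : fieldType) (A B : 'M[C]_2) (l : letter) : 'M[C]_2 :=
  match l with La => A | LaI => A^-1 | Lb => B | LbI => B^-1 end.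

Definition evalw (C : fieldType) (A B : 'M[C]_2) (w : word) : 'M[C]_2 :=
  foldr (fun l M => letter_mx A B l * M) 1 w.

Definition is_trace_poly (C : fieldType) (P : {mpoly C[3]}) (u : word) : Prop :=
  forall A B : 'M[C]_2, \det A = 1 -> \det B = 1 ->
    \tr (evalw A B u) = P.@[fun i : 'I_3 => tnth [tuple \tr A; \tr B; \tr (A * B^-1)] i].

Fixpoint chebn (R : pzRingType) (w : R) (k : nat) : R :=
  match k with
  | 0 => 1
  | 1 => w
  | (k1.+1 as k2).+1 => w * chebn w k2 - chebn w k1
  end.

Definition cheb (R : pzRingType) (j : int) (w : R) : R :=
  match j with
  | Posz k => chebn w k
  | Negz 0 => 0                 (* S_{-1} = 0 *)
  | Negz k.+1 => - chebn w k    (* S_{-(k+2)} = - S_k *)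
  end.

Definition tpar (R : pzRingType) (m : int) (x y z : R) : R :=
  (x * cheb m z - y * cheb (m - 1) z) * (y * cheb m z - x * cheb (m - 1) z)
  - z * (cheb m z ^+ 2 + cheb (m - 1) z ^+ 2) + 4 * cheb m z * cheb (m - 1) z.

(* Main.v *)
Require Import Defs.
From HB Require Import structures.
From mathcomp Require Import all_boot all_algebra.
From mathcomp Require Import reals.
From mathcomp.real_closed Require Import complex.
From mathcomp Require Import mpoly.
From mathcomp Require Import ring zify.
Import GRing.Theory Num.Theory.
Local Open Scope ring_scope.

Section Cheb.
Variable R : comPzRingType.

Lemma cheb_rec (k : int) (w : R) : cheb (k + 1) w = w * cheb k w - cheb (k - 1) w.
Proof.
case: k => [[|j]|[|j]].
- by rewrite /= mulr1 subr0.
- have -> : (Posz j.+1 + 1 = Posz j.+2)%R by lia.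
  have -> : (Posz j.+1 - 1 = Posz j)%R by lia.
  by [].
- have -> : (Negz 0 + 1 = Posz 0)%R by lia.
  have -> : (Negz 0 - 1 = Negz 1)%R by lia.
  by rewrite /= mulr0 sub0r opprK.
- have -> : (Negz j.+1 + 1 = Negz j)%R by lia.
  have -> : (Negz j.+1 - 1 = Negz j.+2)%R by lia.
  case: j => [|j] /=; first by rewrite mulrN opprK mulr1 addNr.
  by rewrite mulrN opprK addrC; ring.
Qed.

Lemma cheb_rel (k : int) (w : R) :
  cheb k w ^+ 2 - w * cheb k w * cheb (k - 1) w + cheb (k - 1) w ^+ 2 = 1.
Proof.
pose f k := cheb k w ^+ 2 - w * cheb k w * cheb (k - 1) w + cheb (k - 1) w ^+ 2.
have step j : f (j + 1) = f j.
  rewrite /f cheb_rec (_ : j + 1 - 1 = j); last by lia.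
  ring.
have f0 : f 0 = 1.
  rewrite /f (_ : (0 - 1 = Negz 0)%R); last by lia.
  rewrite /=; ring.
rewrite -/(f k).
case: k => j.
  elim: j => [|j IH] //; by rewrite (_ : Posz j.+1 = Posz j + 1) ?step //; lia.
elim: j => [|j IH].
  by rewrite -step (_ : Negz 0 + 1 = 0); [|lia].
by rewrite -step (_ : Negz j.+1 + 1 = Negz j); [|lia].
Qed.

Lemma cheb_m2 (k : int) (w : R) : cheb (k - 2) w = w * cheb (k - 1) w - cheb k w.
Proof.
have := cheb_rec (k - 1) w.
rewrite (_ : k - 1 + 1 = k); last by lia.
rewrite (_ : k - 1 - 1 = k - 2); last by lia.
move=> ->; ring.
Qed.

Lemma rmorph_cheb (S : comPzRingType) (g : {rmorphism R -> S}) k w :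
  g (cheb k w) = cheb k (g w).
Proof.
have hn j : g (chebn w j) = chebn (g w) j /\ g (chebn w j.+1) = chebn (g w) j.+1.
  elim: j => [|j [IH1 IH2]]; first by rewrite /= rmorph1.
  split => //=.
  by rewrite rmorphB rmorphM /= IH1 IH2.
case: k => [j|[|j]] /=; first by case: (hn j).
  by rewrite rmorph0.
by rewrite rmorphN; case: (hn j) => ->.
Qed.
End Cheb.

Section MK.
Variable C : fieldType.

Definition mk (a b c d : C) : 'M[C]_2 :=
  \matrix_(i, j) if (i : nat) == 0%N then (if (j : nat) == 0%N then a else b)
                 else (if (j : nat) == 0%N then c else d).

Lemma ord2P (i : 'I_2) : i = 0 \/ i = 1.
Proof. case: i => [[|[|i]] Hi]; [left|right|]; try exact/val_inj. by []. Qed.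

Lemma mkE (M : 'M[C]_2) : M = mk (M 0 0) (M 0 1) (M 1 0) (M 1 1).
Proof.
apply/matrixP => i j; rewrite !mxE.
by case: (ord2P i) => ->; case: (ord2P j) => ->.
Qed.

Lemma mk_mul a b c d e f g h :
  mk a b c d * mk e f g h = mk (a*e+b*g) (a*f+b*h) (c*e+d*g) (c*f+d*h).
Proof.
apply/matrixP => i j; rewrite !mxE !big_ord_recr big_ord0 /= !mxE add0r.
by case: (ord2P i) => ->; case: (ord2P j) => ->.
Qed.

Lemma mk_add a b c d e f g h :
  mk a b c d + mk e f g h = mk (a+e) (b+f) (c+g) (d+h).
Proof.
apply/matrixP => i j; rewrite !mxE.
by case: (ord2P i) => ->; case: (ord2P j) => ->.
Qed.

Lemma mk_opp a b c d : - mk a b c d = mk (-a) (-b) (-c) (-d).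
Proof.
apply/matrixP => i j; rewrite !mxE.
by case: (ord2P i) => ->; case: (ord2P j) => ->.
Qed.

Lemma mk_scale k a b c d : k *: mk a b c d = mk (k*a) (k*b) (k*c) (k*d).
Proof.
apply/matrixP => i j; rewrite !mxE.
by case: (ord2P i) => ->; case: (ord2P j) => ->.
Qed.

Lemma mk_scalar k : k%:M = mk k 0 0 k.
Proof.
apply/matrixP => i j; rewrite !mxE.
by case: (ord2P i) => ->; case: (ord2P j) => ->.
Qed.

Lemma mk1 : (1 : 'M[C]_2) = mk 1 0 0 1.
Proof. by rewrite -mk_scalar. Qed.

Lemma tr_mk a b c d : \tr (mk a b c d) = a + d.
Proof. by rewrite /mxtrace !big_ord_recr big_ord0 /= !mxE add0r. Qed.

Lemma det_mk a b c d : \det (mk a b c d) = a * d - b * c.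
Proof.
rewrite (expand_det_row _ 0) !big_ord_recr big_ord0 /= add0r.
rewrite /cofactor !det_mx11 !mxE /=.
rewrite addn0 add0n expr0 expr1; ring.
Qed.

Lemma CH (M : 'M[C]_2) : M * M = \tr M *: M - (\det M)%:M.
Proof.
rewrite (mkE M) mk_mul tr_mk det_mk mk_scale mk_scalar mk_opp mk_add.
congr mk; ring.
Qed.

Variables A B : 'M[C]_2.
Hypotheses (hA : \det A = 1) (hB : \det B = 1).

Lemma evalw_cat u v : evalw A B (u ++ v) = evalw A B u * evalw A B v.
Proof. by elim: u => [|l u IH] /=; [rewrite mul1r | rewrite IH mulrA]. Qed.

Lemma unitA : A \is a GRing.unit.
Proof. by rewrite unitmxE hA unitr1. Qed.
Lemma unitB : B \is a GRing.unit.
Proof. by rewrite unitmxE hB unitr1. Qed.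

Lemma det_letter l : \det (letter_mx A B l) = 1.
Proof.
case: l => /=; rewrite ?hA ?hB //.
- by rewrite det_inv hA invr1.
- by rewrite det_inv hB invr1.
Qed.

Lemma det_evalw w : \det (evalw A B w) = 1.
Proof.
elim: w => [|l w IH] /=; first exact: det1.
by rewrite det_mulmx det_letter IH mulr1.
Qed.

Lemma letter_invK l : letter_mx A B (letter_inv l) * letter_mx A B l = 1.
Proof.
case: l => /=.
- exact: (mulVr unitA).
- exact: (divrr unitA).
- exact: (mulVr unitB).
- exact: (divrr unitB).
Qed.

Lemma evalw_winvK w : evalw A B (winv w) * evalw A B w = 1.
Proof.
elim: w => [|l w IH]; first by rewrite /= mulr1.
rewrite /winv /= rev_cons -cats1 evalw_cat /= mulr1.
by rewrite -mulrA (mulrA (letter_mx _ _ _)) letter_invK mul1r IH.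
Qed.

Lemma inv_tr (M : 'M[C]_2) : \det M = 1 -> M * ((\tr M)%:M - M) = 1.
Proof.
move=> hM; rewrite mulrBr CH hM.
rewrite (mkE M) ?(tr_mk, mk_scalar, mk_scale, mk_mul, mk_opp, mk_add, mk1).
congr mk; ring.
Qed.

Lemma evalw_winv w : evalw A B (winv w) = (\tr (evalw A B w))%:M - evalw A B w.
Proof.
rewrite -[LHS]mulr1 -(@inv_tr _ (det_evalw w)) mulrA evalw_winvK mul1r //.
Qed.

Lemma evalw_flat w k : evalw A B (flatten (nseq k w)) = evalw A B w ^+ k.
Proof. by elim: k => [|k IH] //=; rewrite evalw_cat IH exprS. Qed.

Lemma pow_cheb (M : 'M[C]_2) k : \det M = 1 ->
  M ^+ k = cheb (k%:Z - 1) (\tr M) *: M - (cheb (k%:Z - 2) (\tr M))%:M.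
Proof.
move=> hM; elim: k => [|k IH].
  have -> : (Posz 0 - 1 = Negz 0)%R by lia.
  have -> : (Posz 0 - 2 = Negz 1)%R by lia.
  rewrite expr0 /= (mkE M) ?(tr_mk, mk_scalar, mk_scale, mk_mul, mk_opp, mk_add, mk1).
  congr mk; ring.
have e1 : (Posz k.+1 - 1 = (Posz k - 1) + 1)%R by lia.
have e2 : (Posz k.+1 - 2 = Posz k - 1)%R by lia.
have e3 : (Posz k - 1 - 1 = Posz k - 2)%R by lia.
rewrite exprSr IH e1 e2 cheb_rec e3.
move: (cheb (Posz k - 1) (\tr M)) (cheb (Posz k - 2) (\tr M)) => c1 c2.
rewrite mulrBl -scalerAl CH hM.
move: (\tr M) => t.
rewrite (mkE M) ?(tr_mk, mk_scalar, mk_scale, mk_mul, mk_opp, mk_add, mk1).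
congr mk; ring.
Qed.

Lemma evalw_wpow w k : evalw A B (wpow w k) =
  cheb (k - 1) (\tr (evalw A B w)) *: evalw A B w
  - (cheb (k - 2) (\tr (evalw A B w)))%:M.
Proof.
case: k => n.
  by rewrite [wpow _ _]/= evalw_flat (pow_cheb _ _ (det_evalw w)).
have -> : wpow w (Negz n) = flatten (nseq n.+1 (winv w)) by [].
rewrite evalw_flat (pow_cheb _ _ (det_evalw (winv w))) evalw_winv.
have e1 : (Posz n.+1 - 1 = Posz n)%R by lia.
have e2 : (Posz n.+1 - 2 = Posz n - 1)%R by lia.
have e3 : (Negz n - 1 = Negz n.+1)%R by lia.
have e4 : (Negz n - 2 = Negz n.+2)%R by lia.
have e5 : Posz n.+1 = (Posz n + 1)%R by lia.
rewrite e1 e2 e3 e4.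
have -> : forall t : C, cheb (Negz n.+2) t = - cheb (Posz n + 1) t.
  by move=> t; rewrite -e5.
have -> : forall t : C, cheb (Negz n.+1) t = - cheb (Posz n) t by [].
rewrite cheb_rec.
move: (evalw A B w) => M.
have tN : \tr ((\tr M)%:M - M) = \tr M.
  by rewrite (mkE M) ?(tr_mk, mk_scalar, mk_scale, mk_mul, mk_opp, mk_add, mk1); ring.
rewrite tN.
move: (\tr M) => t.
move: (cheb (Posz n - 1) t) (cheb (Posz n) t) => c1 c0.
rewrite (mkE M) ?(tr_mk, mk_scalar, mk_scale, mk_mul, mk_opp, mk_add, mk1).
congr mk; ring.
Qed.
End MK.
Arguments mk {C}.

Section Van.
Variable C : numFieldType.

Lemma poly_nonroot (q : {poly C}) : q != 0 -> exists x, q.[x] != 0.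
Proof.
move=> qn0.
pose s := map (fun k : nat => k%:R : C) (iota 0 (size q)).
have us : uniq s.
  rewrite map_inj_uniq ?iota_uniq //.
  by move=> i j /eqP; rewrite eqr_nat => /eqP.
have : ~~ all (root q) s.
  apply/negP => H.
  have := max_poly_roots qn0 H us.
  by rewrite size_map size_iota ltnn.
by case/allPn => x _ hx; exists x.
Qed.

Lemma mpoly3_eq0 (p : {mpoly C[3]}) : (forall v, p.@[v] = 0) -> p = 0.
Proof.
move=> H.
pose D := msize p.
pose i0 : 'I_3 := @Ordinal 3 0 isT.
pose i1 : 'I_3 := @Ordinal 3 1 isT.
pose i2 : 'I_3 := @Ordinal 3 2 isT.
pose kron (m : 'X_{1..3}) := (m i0 + D * (m i1 + D * m i2))%N.
have mlt m i : m \in msupp p -> (m i < D)%N.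
  move=> /msize_mdeg_lt; apply: leq_ltn_trans.
  by rewrite mdegE (bigD1 i) //= leq_addr.
have kron_inj m1 m2 : m1 \in msupp p -> m2 \in msupp p -> kron m1 = kron m2 -> m1 = m2.
  move=> h1 h2 e.
  have Dp : (0 < D)%N by apply: leq_ltn_trans (mlt _ ord0 h1).
  have ek a b : (a < D)%N -> ((a + D * b) %% D = a)%N /\ ((a + D * b) %/ D = b)%N.
    move=> ha; split; first by rewrite addnC mulnC modnMDl modn_small.
    by rewrite addnC mulnC divnMDl // divn_small ?addn0.
  have [a1 b1] := ek _ (m1 i1 + D * m1 i2)%N (mlt m1 i0 h1).
  have [a2 b2] := ek _ (m2 i1 + D * m2 i2)%N (mlt m2 i0 h2).
  have [c1 d1] := ek _ (m1 i2) (mlt m1 i1 h1).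
  have [c2 d2] := ek _ (m2 i2) (mlt m2 i1 h2).
  rewrite /kron in e.
  apply/mnmP => i.
  have E0 : m1 i0 = m2 i0 by rewrite -a1 -a2 e.
  have E12 : (m1 i1 + D * m1 i2 = m2 i1 + D * m2 i2)%N by rewrite -b1 -b2 e.
  have E1 : m1 i1 = m2 i1 by rewrite -c1 -c2 E12.
  have E2 : m1 i2 = m2 i2 by rewrite -d1 -d2 E12.
  case: i => [[|[|[|i]]] Hi] //.
  - by have -> : Ordinal Hi = i0 by apply/val_inj.
  - by have -> : Ordinal Hi = i1 by apply/val_inj.
  - by have -> : Ordinal Hi = i2 by apply/val_inj.
pose q : {poly C} := \sum_(m <- msupp p) p@_m *: 'X^(kron m).
have P3 (F : 'I_3 -> C) : \prod_(i < 3) F i = F i0 * F i1 * F i2.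
  rewrite !big_ord_recr big_ord0 /=.
  have e : forall (a b c : C), 1 * a * b * c = a * b * c by move=> a b c; ring.
  rewrite e; congr (F _ * F _ * F _); exact/val_inj.
have qE x : q.[x] = p.@[fun i : 'I_3 => x ^+ (D ^ i)].
  rewrite mevalE horner_sum; apply: eq_bigr => m _.
  rewrite hornerZ hornerXn P3; congr (_ * _).
  rewrite -!exprM -!exprD /kron /=; congr (_ ^+ _); lia.
have qc m0 : m0 \in msupp p -> q`_(kron m0) = p@_m0.
  move=> hm0; rewrite coef_sum (bigD1_seq m0) ?msupp_uniq //=.
  rewrite coefZ coefXn eqxx mulr1 big1 ?addr0 // => m hm.
  rewrite coefZ coefXn; case: eqP => [e|]; last by rewrite mulr0.
  move: hm; case: (boolP (m \in msupp p)) => [hin|]; last by rewrite -mcoeff_eq0 => /eqP ->; rewrite mul0r.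
  by rewrite (kron_inj _ _ hm0 hin e) eqxx.
apply/mpolyP => m0; rewrite mcoeff0.
case: (boolP (m0 \in msupp p)) => [hin|]; last by rewrite -mcoeff_eq0 => /eqP.
have qn0 : q != 0.
  apply/eqP => q0; have := qc _ hin; rewrite q0 coef0 => /esym/eqP.
  by rewrite mcoeff_eq0 hin.
have [x hx] := poly_nonroot _ qn0.
by move: hx; rewrite qE H eqxx.
Qed.
End Van.

Lemma rev_flat_nseq (s : seq letter) k : rev (flatten (nseq k s)) = flatten (nseq k (rev s)).
Proof.
elim: k => [|k IH] //=; rewrite rev_cat IH.
elim: k {IH} => [|k IH] /=; first by rewrite cats0.
by rewrite -catA IH.
Qed.

Lemma rev_winv w : rev (winv w) = winv (rev w).
Proof. by rewrite /winv revK map_rev revK. Qed.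

Lemma rev_wpow w k : rev (wpow w k) = wpow (rev w) k.
Proof. by case: k => k; rewrite /wpow rev_flat_nseq ?rev_winv. Qed.

Lemma mk_inv (C : fieldType) (a b c d : C) : a * d - b * c = 1 ->
  (mk a b c d)^-1 = mk d (-b) (-c) a.
Proof.
move=> h.
have H : mk d (-b) (-c) a * mk a b c d = 1.
  rewrite mk_mul mk1; congr mk; try (rewrite -h); ring.
have u : mk a b c d \is a GRing.unit by rewrite unitmxE det_mk h unitr1.
by rewrite -[LHS]mul1r -H mulrK.
Qed.

Section Conc.
Variable C : fieldType.
Variables (x y p : C) (m n : int).
Definition Am := mk x (-1) 1 0.
Definition Bm := mk p (-1) (1 - p * (y - p)) (y - p).
Definition zz := (x - p) * (y - p) + 2.

Lemma detA : \det Am = 1. Proof. rewrite det_mk; ring. Qed.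
Lemma detB : \det Bm = 1. Proof. rewrite det_mk; ring. Qed.
Lemma invA : Am^-1 = mk 0 1 (-1) x.
Proof. rewrite /Am mk_inv; [congr mk; ring | ring]. Qed.
Lemma invB : Bm^-1 = mk (y - p) 1 (p * (y - p) - 1) p.
Proof. rewrite /Bm mk_inv; [congr mk; ring | ring]. Qed.

Ltac mksimp := rewrite ?(invA, invB) /Am /Bm ?(tr_mk, mk_scalar, mk_scale, mk_mul, mk_opp, mk_add, mk1).

Lemma trs1 : \tr (evalw Am Bm [:: La; LbI]) = zz.
Proof. rewrite /= mulr1; mksimp; rewrite /zz; ring. Qed.
Lemma trs2 : \tr (evalw Am Bm [:: LaI; Lb]) = zz.
Proof. rewrite /= mulr1; mksimp; rewrite /zz; ring. Qed.
Lemma trs3 : \tr (evalw Am Bm [:: LbI; La]) = zz.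
Proof. rewrite /= mulr1; mksimp; rewrite /zz; ring. Qed.
Lemma trs4 : \tr (evalw Am Bm [:: Lb; LaI]) = zz.
Proof. rewrite /= mulr1; mksimp; rewrite /zz; ring. Qed.

Definition wkr := wpow [:: Lb; LaI] m ++ [:: Lb; La] ++ wpow [:: LbI; La] m.

Lemma rev_wk : rev (wk m) = wkr.
Proof. by rewrite /wk /wkr !rev_cat !rev_wpow catA. Qed.

Lemma trW : \tr (evalw Am Bm (wk m)) = tpar m x y zz.
Proof.
rewrite /wk !evalw_cat !(evalw_wpow _ _ _ detA detB) trs1 trs2 cheb_m2 /tpar.
move: (cheb m zz) (cheb (m - 1) zz) => u v.
rewrite /= !mulr1; mksimp; rewrite /zz; ring.
Qed.

Lemma trWr : \tr (evalw Am Bm wkr) = tpar m x y zz.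
Proof.
rewrite /wkr !evalw_cat !(evalw_wpow _ _ _ detA detB) trs3 trs4 cheb_m2 /tpar.
move: (cheb m zz) (cheb (m - 1) zz) => u v.
rewrite /= !mulr1; mksimp; rewrite /zz; ring.
Qed.

Lemma main_conc :
  \tr (evalw Am Bm (rword m n ++ [:: La; Lb]))
  - \tr (evalw Am Bm (wrev (rword m n) ++ [:: La; Lb]))
  = (x * y * zz + 4 - x ^+ 2 - y ^+ 2 - zz ^+ 2)
    * (cheb n (tpar m x y zz) * cheb (m - 1) zz
       - cheb (n - 1) (tpar m x y zz) * cheb m zz).
Proof.
rewrite /wrev /rword rev_cat !rev_wpow rev_wk.
have -> : rev [:: La; LbI] = [:: LbI; La] by [].
rewrite !evalw_cat.
rewrite (evalw_wpow _ _ _ detA detB (wk m)) (evalw_wpow _ _ _ detA detB wkr) trW trWr cheb_m2.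
move: (cheb n (tpar m x y zz)) (cheb (n - 1) (tpar m x y zz)) => N0 N1.
rewrite /wk /wkr !evalw_cat !(evalw_wpow _ _ _ detA detB) trs1 trs2 trs3 trs4 cheb_m2.
rewrite /tpar.
have hrel := cheb_rel _ m zz; move: hrel.
move: (cheb m zz) (cheb (m - 1) zz) => u v hrel.
rewrite /= !mulr1; mksimp.
apply/eqP; rewrite -subr_eq0; apply/eqP.
rewrite (_ : _ - _ = (u ^+ 2 - zz * u * v + v ^+ 2 - 1) * (N1 * (0 + 4%:R*p^+2*u + p^+4*u - 4%:R*y*p*u - 2%:R*y*p^+3*u + y^+2*u + y^+2*p^+2*u - 4%:R*x*p*u - 2%:R*x*p^+3*u + 2%:R*x*y*u + 3%:R*x*y*p^+2*u - x*y^+2*p*u + x^+2*u + x^+2*p^+2*u - x^+2*y*p*u))).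
  by rewrite hrel subrr mul0r.
rewrite /zz; ring.
Qed.
End Conc.
Arguments zz {C}.
Arguments Am {C}.
Arguments Bm {C}.

Lemma rmorph_tpar (R S : comPzRingType) (g : {rmorphism R -> S}) k (a b c : R) :
  g (tpar k a b c) = tpar k (g a) (g b) (g c).
Proof.
by rewrite /tpar !(rmorphB, rmorphD, rmorphM, rmorphXn, rmorph_cheb) rmorph1.
Qed.


Lemma meval_cheb (C : comRingType) (v : 'I_3 -> C) (w : {mpoly C[3]}) k :
  (cheb k w).@[v] = cheb k (w.@[v]).
Proof. exact: (rmorph_cheb _ _ (meval v)). Qed.

Lemma meval_tpar (C : comRingType) (v : 'I_3 -> C) (a b c : {mpoly C[3]}) k :
  (tpar k a b c).@[v] = tpar k a.@[v] b.@[v] c.@[v].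
Proof. exact: (rmorph_tpar _ _ (meval v)). Qed.

Lemma meval_exp (C : comRingType) (v : 'I_3 -> C) (w : {mpoly C[3]}) k :
  (w ^+ k).@[v] = w.@[v] ^+ k.
Proof. exact: (rmorphXn (meval v)). Qed.

Theorem proposition3p10 (R : realType) (m n : int)
    (Prab Prevab : {mpoly R[i][3]}) :
  is_trace_poly Prab (rword m n ++ [:: La; Lb]) ->
  is_trace_poly Prevab (wrev (rword m n) ++ [:: La; Lb]) ->
  let x : {mpoly R[i][3]} := 'X_0 in
  let y : {mpoly R[i][3]} := 'X_1 in
  let z : {mpoly R[i][3]} := 'X_2 in
  let t := tpar m x y z in
  Prab - Prevab =
    (x * y * z + 4 - x ^+ 2 - y ^+ 2 - z ^+ 2)
    * (cheb n t * cheb (m - 1) z - cheb (n - 1) t * cheb m z).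
Proof.
move=> H1 H2 x y z t.
apply/eqP; rewrite -subr_eq0; apply/eqP; apply: mpoly3_eq0 => v.
set a := v 0; set b := v 1; set c := v 2.
pose s := sqrtC ((a - b) ^+ 2 + 4 * (c - 2)).
pose p := (a + b + s) / 2.
have hz : zz a b p = c.
  have hs : s ^+ 2 = (a - b) ^+ 2 + 4 * (c - 2) by rewrite /s sqrtCK.
  rewrite /zz /p.
  have h2 : (2 : R[i]) != 0 by rewrite pnatr_eq0.
  transitivity ((s ^+ 2 - (a - b) ^+ 2) / 4 + 2); first by field.
  by rewrite hs; field.
rewrite /t !(mevalB, mevalD, mevalM, meval_cheb, meval_tpar, meval_exp, meval1) /x /y /z !mevalXU -/a -/b -/c.
have ev : forall i, tnth [tuple \tr (Am a); \tr (Bm b p); \tr (Am a * (Bm b p)^-1)] i = v i.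
  have tA : \tr (Am a) = a by rewrite /Am tr_mk addr0.
  have tB : \tr (Bm b p) = b by rewrite /Bm tr_mk addrC subrK.
  have tZ : \tr (Am a * (Bm b p)^-1) = c.
    by rewrite -hz -(trs1 _ a b p) /= mulr1.
  case=> [[|[|[|i]]] Hi] //; rewrite (tnth_nth 0) /= ?tA ?tB ?tZ /a /b /c; congr v; exact/val_inj.
have E1 : Prab.@[v] = \tr (evalw (Am a) (Bm b p) (rword m n ++ [:: La; Lb])).
  by rewrite (H1 _ _ (detA _ a) (detB _ b p)); apply: meval_eq => i; rewrite ev.
have E2 : Prevab.@[v] = \tr (evalw (Am a) (Bm b p) (wrev (rword m n) ++ [:: La; Lb])).
  by rewrite (H2 _ _ (detA _ a) (detB _ b p)); apply: meval_eq => i; rewrite ev.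
rewrite E1 E2 main_conc hz.
ring.
Qed.
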